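(* If $G$ is a CAM group, then $G$ is residually finite.
   Context: Let $G$ be a countable discrete group. A topological $G$-system $(X,T)$ consists of a compact metric space $X$ and an action $T\colon G\to\mathrm{Homeo}(X)$, $g\mapsto T_g$. The system is topologically transitive if for all nonempty open $U,V\subseteq X$ there is $g\in G$ with $T_gU\cap V\neq\emptyset$; the action is faithful if $T_g=\mathrm{id}_X$ only when $g$ is the identity. A point is periodic if its $G$-orbit is finite. The system is chaotic almost minimal (CAM) if: (1) it is topologically transitive and the action is faithful; (2) the periodic points are dense in $X$; (3) every proper closed $T$-invariant subset of $X$ is finite. The group $G$ is a CAM group if there is an infinite compact metric space $X$ and a CAM $G$-system on $X$. A group is residually finite if for every non-identity $g$ there is a homomorphism to a finite group not sending $g$ to the identity. *)

(* Defs.v *)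
From HB Require Import structures.
From mathcomp Require Import all_boot all_order all_algebra all_fingroup.
From mathcomp Require Import all_classical all_reals all_analysis.

Set Implicit Arguments.
Unset Strict Implicit.
Unset Printing Implicit Defensive.

Import Order.TTheory GRing.Theory Num.Theory.
Local Open Scope classical_set_scope.

(* A (left) action of a (possibly infinite) group G on a topological space X
   by homeomorphisms: T 1 = id, T (g * h) = T g \o T h, each T g continuous.
   (Each T g is then a homeomorphism with inverse T g^-1.) *)
Definition is_action_by_homeos (G : groupType) (X : topologicalType)
  (T : G -> X -> X) : Prop :=
  [/\ forall x, T 1%g x = x,
      forall g h x, T (g * h)%g x = T g (T h x)
    & forall g, continuous (T g)].

Definition topologically_transitive (G : groupType) (X : topologicalType)
  (T : G -> X -> X) : Prop :=
  forall U V : set X, open U -> open V -> U !=set0 -> V !=set0 ->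
    exists g : G, (T g @` U) `&` V !=set0.

Definition faithful_action (G : groupType) (X : Type) (T : G -> X -> X) : Prop :=
  forall g : G, (forall x, T g x = x) -> g = 1%g.

Definition orbit_of (G : groupType) (X : Type) (T : G -> X -> X) (x : X) : set X :=
  [set T g x | g in [set: G]].

Definition periodic_point (G : groupType) (X : Type) (T : G -> X -> X) (x : X) : Prop :=
  finite_set (orbit_of T x).

Definition T_invariant (G : groupType) (X : Type) (T : G -> X -> X) (A : set X) : Prop :=
  forall g x, A x -> A (T g x).

Definition CAM (G : groupType) (X : topologicalType) (T : G -> X -> X) : Prop :=
  [/\ is_action_by_homeos T,
      topologically_transitive T /\ faithful_action T,
      dense [set x | periodic_point T x]
    & forall A : set X, closed A -> T_invariant T A -> A != [set: X] ->
        finite_set A].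

Definition CAM_group (G : groupType) : Prop :=
  exists (R : realType) (X : metricType R) (T : G -> X -> X),
    compact [set: X] /\ infinite_set [set: X] /\ CAM T.

Definition group_hom (G H : groupType) (f : G -> H) : Prop :=
  forall x y, f (x * y)%g = (f x * f y)%g.

Definition residually_finite (G : groupType) : Prop :=
  forall g : G, g != 1%g ->
    exists (F : finGroupType) (f : G -> F), group_hom f /\ f g != 1%g.

(* Main.v *)
Require Import Defs.
From mathcomp Require Import all_boot all_order all_algebra all_fingroup.
From mathcomp Require Import all_classical all_reals all_analysis.
From mathcomp Require Import finmap.

Local Open Scope classical_set_scope.

Lemma moved_periodic (G : groupType) (X : topologicalType) (T : G -> X -> X)
  (g : G) (x0 : X) :
  is_action_by_homeos T -> dense [set x | periodic_point T x] ->
  hausdorff_space X -> T g x0 != x0 ->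
  exists p, periodic_point T p /\ T g p != p.
Proof.
move=> [_ _ Tc] Hd Hh Hx.
move: Hh; rewrite open_hausdorff => Hh; have := Hh _ _ Hx.
case=> -[A B] /= [Ain Bin] [oA oB /eqP AB0].
have oO : open (B `&` (T g @^-1` A)).
  apply: openI => //; apply: open_comp => // y _; exact: Tc.
have [p [[pB pA] pP]] : (B `&` (T g @^-1` A)) `&` [set x | periodic_point T x] !=set0.
  apply: Hd oO; exists x0; split; first exact: set_mem Bin.
  exact: set_mem Ain.
exists p; split => //; apply/eqP => E.
have : (A `&` B) p by split => //; rewrite -E.
by rewrite AB0.
Qed.

Theorem proposition3p1 (G : groupType) :
  countable [set: G] -> CAM_group G -> residually_finite G.
Proof.
move=> _ [R [X [T [_ [_ [Ha [_ Hf] Hd _]]]]]].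
have [T1 TM _] := Ha.
move=> g gn1.
have gi : (g^-1 != 1)%g by rewrite invg_eq1.
have [x0 Hx0] : exists x0, T g^-1%g x0 != x0.
  apply: contrapT => H; move/eqP: gi; apply; apply: Hf => x.
  apply/eqP; apply: contrapT => Hn; apply: H; exists x; exact/negP.
have [p [pP pm]] := @moved_periodic G X T _ x0 Ha Hd (@metric_hausdorff _ X) Hx0.
have [s Hs] := iffLR finite_fsetP pP.
have memS : forall y, (y \in s) <-> [set` s] y by [].
have orbT : forall h y, y \in s -> T h y \in s.
  move=> h y /memS; rewrite -Hs => -[k _ <-]; apply/memS; rewrite -Hs.
  by exists (h * k)%g => //; rewrite TM.
have ps : p \in s.
  by apply/memS; rewrite -Hs; exists 1%g.
pose sig (h : G) (y : s) : s := insubd y (T h (val y)).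
have valsig : forall h y, val (sig h y) = T h (val y).
  by move=> h y; rewrite /sig insubdK //; apply: orbT; exact: valP.
have sigK : forall h, cancel (sig h) (sig h^-1%g).
  by move=> h y; apply: val_inj; rewrite !valsig -TM mulVg T1.
pose f (h : G) : {perm s} := perm (can_inj (sigK h^-1%g)).
exists {perm s}, f; split.
  move=> a b; apply/permP => z; rewrite permM !permE; apply: val_inj.
  by rewrite !valsig invMg TM.
apply/eqP => E.
pose y0 : s := FSetSub ps.
have E2 : f g y0 = y0.
  by rewrite E perm1.
have E3 : sig g^-1%g y0 = y0 by rewrite -[RHS]E2 /f permE.
have := congr1 val E3; rewrite valsig /=.
by move/eqP: pm.
Qed.
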